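(* Let $\Gamma(\mathbf{v})$ be a covariance matrix, viewed as an $N\times N$ block matrix with blocks $\Gamma_{\alpha\beta}$, and suppose $\Gamma(\mathbf{v})\in\mathcal{BC}_2$ (block coherence number at most two). Let $S$ be any set of unordered pairs $\{\alpha,\beta\}$ with $\alpha\neq\beta$, and let $\Gamma'$ be obtained from $\Gamma(\mathbf{v})$ by replacing $\Gamma_{\alpha\beta}$ by $-\Gamma_{\alpha\beta}$ and $\Gamma_{\beta\alpha}$ by $-\Gamma_{\beta\alpha}$ for every $\{\alpha,\beta\}\in S$ (all other blocks unchanged). Then $\Gamma'$ is positive semidefinite.
   Context: The covariance matrix of a distribution $p(x_1,\dots,x_N)$ is $\Gamma(\mathbf{v})=E(\mathbf{v}\mathbf{v}^\dagger)-E(\mathbf{v})E(\mathbf{v})^\dagger$, where $\mathbf{v}_{x_1,\dots,x_N}=|x_1\rangle+\dots+|x_N\rangle$ with $|x_n\rangle$ a basis vector of $\mathcal{V}_n$, the spaces $\mathcal{V}_1,\dots,\mathcal{V}_N$ mutually orthogonal, $E(\mathbf{v}\mathbf{v}^\dagger)=\sum_x\mathbf{v}_x\mathbf{v}_x^\dagger p(x)$, $E(\mathbf{v})=\sum_x\mathbf{v}_xp(x)$; block $\Gamma_{\alpha\beta}=P_\alpha\Gamma P_\beta$ where $P_n$ is the orthogonal projector onto $\mathcal{V}_n$. $\mathcal{BC}_2$ is the set of all finite sums of operators $|\psi\rangle\langle\psi|$ where $|\psi\rangle$ has at most two nonzero components $P_n|\psi\rangle$. *)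

(* Defs.v *)
From HB Require Import structures.
From mathcomp Require Import all_boot all_order all_algebra all_field.
Set Implicit Arguments. Unset Strict Implicit. Unset Printing Implicit Defensive.
Import Order.TTheory GRing.Theory Num.Theory.
Local Open Scope ring_scope.

(* Spaces V_1..V_N (indexed by 'I_N), V_n of dimension d n.  The direct sum
   V_1 (+) ... (+) V_N has orthonormal basis indexed by
   bidx d = {n : 'I_N & 'I_(d n)}; the block of an index k is tag k.
   Matrices on the direct sum are functions bidx d -> bidx d -> algC. *)
Definition bidx (N : nat) (d : 'I_N -> nat) := {n : 'I_N & 'I_(d n)}.

(* Outcomes x = (x_1, ..., x_N) with x_n a basis label of V_n. *)
Definition outcome (N : nat) (d : 'I_N -> nat) := {dffun forall n : 'I_N, 'I_(d n)}.

(* v_x = |x_1> + ... + |x_N> *)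
Definition vvec N (d : 'I_N -> nat) (x : outcome d) (k : bidx d) : algC :=
  if x (tag k) == tagged k then 1 else 0.

Definition is_distribution N (d : 'I_N -> nat) (p : outcome d -> algC) :=
  (forall x, 0 <= p x) /\ \sum_x p x = 1.

Definition Evv N (d : 'I_N -> nat) (p : outcome d -> algC) (k l : bidx d) : algC :=
  \sum_x vvec x k * (vvec x l)^* * p x.

Definition Ev N (d : 'I_N -> nat) (p : outcome d -> algC) (k : bidx d) : algC :=
  \sum_x vvec x k * p x.

Definition covmx N (d : 'I_N -> nat) (p : outcome d -> algC) (k l : bidx d) : algC :=
  Evv p k l - Ev p k * (Ev p l)^*.

Definition two_block N (d : 'I_N -> nat) (psi : bidx d -> algC) :=
  exists a b : 'I_N, forall k : bidx d, tag k != a -> tag k != b -> psi k = 0.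

Definition in_BC2 N (d : 'I_N -> nat) (M : bidx d -> bidx d -> algC) :=
  exists (m : nat) (psi : 'I_m -> bidx d -> algC),
    (forall i, two_block (psi i)) /\
    forall k l, M k l = \sum_(i < m) psi i k * (psi i l)^*.

Definition flip_blocks N (d : 'I_N -> nat) (S : {set {set 'I_N}})
  (M : bidx d -> bidx d -> algC) (k l : bidx d) : algC :=
  if [set tag k; tag l] \in S then - M k l else M k l.

Definition psd N (d : 'I_N -> nat) (M : bidx d -> bidx d -> algC) :=
  forall u : bidx d -> algC, 0 <= \sum_k \sum_l (u k)^* * M k l * u l.

(* Main.v *)
Require Import Defs.
From HB Require Import structures.
From mathcomp Require Import all_boot all_order all_algebra all_field.
Import Order.TTheory GRing.Theory Num.Theory.
Local Open Scope ring_scope.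

Definition sg (c : bool) : algC := if c then -1 else 1.

Lemma sg_sq c : sg c * sg c = 1.
Proof. by case: c; rewrite /sg ?mulrNN mulr1. Qed.

Lemma sg_conj c : (sg c)^* = sg c.
Proof. by case: c; rewrite /sg ?rmorphN rmorph1. Qed.

Lemma conj_sgM c (z : algC) : (sg c * z)^* = sg c * z^*.
Proof. by case: c; rewrite /sg ?mulN1r ?mul1r ?rmorphN. Qed.

Lemma conjCM (x y : algC) : (x * y)^* = x^* * y^*.
Proof. exact: rmorphM. Qed.

Lemma conjC_sum (I : finType) (F : I -> algC) : (\sum_i F i)^* = \sum_i (F i)^*.
Proof. exact: rmorph_sum. Qed.

Lemma per_term N (d : 'I_N -> nat) (S : {set {set 'I_N}})
  (HS : forall e, e \in S -> #|e| = 2%N) (psi : bidx d -> algC)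
  (Hp : two_block psi) (u : bidx d -> algC) :
  0 <= \sum_k \sum_l (u k)^* * (sg ([set tag k; tag l] \in S) * (psi k * (psi l)^*)) * u l.
Proof.
case: Hp => a [b Hab].
pose c := [set a; b] \in S.
pose psi' : bidx d -> algC := fun k : bidx d => sg (c && (tag k == b)) * psi k.
have key : forall k l, sg ([set tag k; tag l] \in S) * (psi k * (psi l)^*)
    = psi' k * (psi' l)^*.
  move=> k l; rewrite /psi' conj_sgM.
  have [->|nk] := eqVneq (psi k) 0; first by rewrite !(mulr0, mul0r).
  have [->|nl] := eqVneq (psi l) 0; first by rewrite conjC0 !(mulr0, mul0r).
  have hx : (tag k == a) || (tag k == b).
    by apply: contraR nk => /norP [h1 h2]; rewrite Hab.
  have hy : (tag l == a) || (tag l == b).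
    by apply: contraR nl => /norP [h1 h2]; rewrite Hab.
  have -> : sg (c && (tag k == b)) * psi k * (sg (c && (tag l == b)) * (psi l)^*)
     = (sg (c && (tag k == b)) * sg (c && (tag l == b))) * (psi k * (psi l)^*).
    by rewrite -!mulrA; congr (_ * _); rewrite mulrCA.
  congr (_ * _).
  have [exy|nxy] := eqVneq (tag k) (tag l).
    rewrite exy sg_sq setUid.
    suff -> : ([set tag l] \in S) = false by []. by apply/negP => /HS; rewrite cards1.
  have nab : a != b.
    apply/negP => /eqP eab; move: hx hy nxy; rewrite -eab.
    by move=> /orP [] /eqP -> /orP [] /eqP ->; rewrite eqxx.
  move: hx hy nxy; move=> /orP [] /eqP -> /orP [] /eqP ->; rewrite ?eqxx //= => _.
  - by rewrite (negbTE nab) andbF andbT mul1r.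
  - by rewrite (negbTE nab) andbF andbT mulr1 setUC.
have -> : \sum_k \sum_l (u k)^* * (sg ([set tag k; tag l] \in S) * (psi k * (psi l)^*)) * u l
   = (\sum_k (u k)^* * psi' k) * (\sum_k (u k)^* * psi' k)^*.
  clearbody psi'.
  rewrite mulr_suml; apply: eq_bigr => k _.
  rewrite conjC_sum mulr_sumr; apply: eq_bigr => l _.
  by rewrite key conjCM conjCK -!mulrA [u l * _]mulrC.
exact: (@mul_conjC_ge0 algC).
Qed.

Theorem mainTheorem4 (N : nat) (d : 'I_N -> nat) (p : outcome d -> algC)
  (S : {set {set 'I_N}}) :
  is_distribution p ->
  in_BC2 (covmx p) ->
  (forall e, e \in S -> #|e| = 2%N) ->
  psd (flip_blocks S (covmx p)).
Proof.
move=> _ [m [psi [Hpsi HM]]] HS u.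
have -> : \sum_k \sum_l (u k)^* * flip_blocks S (covmx p) k l * u l
  = \sum_(i < m) \sum_k \sum_l (u k)^* * (sg ([set tag k; tag l] \in S) * (psi i k * (psi i l)^*)) * u l.
  symmetry; rewrite exchange_big /=; apply: eq_bigr => k _.
  rewrite exchange_big /=; apply: eq_bigr => l _.
  rewrite -mulr_suml -mulr_sumr -mulr_sumr; congr (_ * _ * _).
  by rewrite /flip_blocks HM /sg; case: ifP => _; rewrite ?mulN1r ?mul1r.
apply: sumr_ge0 => i _; exact: per_term.
Qed.
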